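(* Let $k\ge2$, $p\in(0,1)$, $q=1-p$, and $R^*=\frac{(k-1)^{k-1}}{k^k}\cdot\frac1{p^{k-1}q}$. If $z\in\mathbb{C}$ with $|z|<R^*$ satisfies $\frac1qS^{(k)}(p^{k-1}qz)=1$, then $z=1$.
   Context: $s^{(k)}_i=\frac{k-1}{ki-1}\binom{ki-1}{i-1}$ for $i\ge1$, and $S^{(k)}(z)=\sum_{i\ge1}s^{(k)}_iz^i$; this series satisfies $S^{(k)}(z)=z/(1-S^{(k)}(z))^{k-1}$ within its disc of convergence. *)

(* Defs.v *)
From mathcomp Require Import all_boot all_order all_algebra.
From mathcomp Require Import complex.
From mathcomp Require Import all_classical all_reals all_analysis.
Import Order.TTheory GRing.Theory Num.Theory numFieldTopology.Exports numFieldNormedType.Exports.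

Set Implicit Arguments.
Unset Strict Implicit.
Unset Printing Implicit Defensive.

Local Open Scope ring_scope.
Local Open Scope complex_scope.
Local Open Scope classical_set_scope.

Definition fuss_s (R : realType) (k i : nat) : R[i] :=
  if i == 0%N then 0
  else ((k.-1)%:R / (k * i).-1%:R) * ('C((k * i).-1, i.-1))%:R.

(* S^{(k)}(w) = sum_{i >= 1} s^{(k)}_i w^i, as the limit of the partial sums
   (meaningful inside the disc of convergence). *)
Definition fussS (R : realType) (k : nat) (w : R[i]) : R[i] :=
  lim (series (fun i => (fuss_s R k i * w ^+ i : Num.ClosedField.sort R[i]%C))
        @ \oo).

Definition Rstar (R : realType) (k : nat) (p : R) : R :=
  ((k.-1)%:R ^+ k.-1 / k%:R ^+ k) * (p ^+ k.-1 * (1 - p))^-1.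

(* Main.v *)
Require Import Defs.
From mathcomp Require Import all_boot all_order all_algebra.
From mathcomp Require Import ring lra zify.
Import Order.TTheory GRing.Theory Num.Theory.
Local Open Scope ring_scope.

Module Aux.
Set Implicit Arguments.
Unset Strict Implicit.
Unset Printing Implicit Defensive.

Section Comb.
Variable F : numFieldType.

Definition gb (t : F) (m : nat) : F := (\prod_(i < m) (t - i%:R)) / (m`!)%:R.

Lemma fact_neq0 m : (m`!)%:R != 0 :> F.
Proof. by rewrite pnatr_eq0 -lt0n fact_gt0. Qed.

Lemma gb0 t : gb t 0 = 1.
Proof. by rewrite /gb big_ord0 fact0 divr1. Qed.

Lemma gbS t m : gb t m.+1 = t * gb (t - 1) m / m.+1%:R.
Proof.
rewrite /gb big_ord_recl /= subr0.
under eq_bigr => i _ do rewrite /bump /= add1n mulrSr opprD addrA addrAC.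
rewrite factS natrM.
have h1 := fact_neq0 m.
have h2 : m.+1%:R != 0 :> F by rewrite pnatr_eq0.
field; by rewrite ?nat1r ?h1 ?h2.
Qed.

Lemma gbSr t m : gb t m.+1 = gb t m * (t - m%:R) / m.+1%:R.
Proof.
rewrite /gb big_ord_recr /= factS natrM.
have h1 := fact_neq0 m.
have h2 : m.+1%:R != 0 :> F by rewrite pnatr_eq0.
field; by rewrite ?nat1r ?h1 ?h2.
Qed.

Lemma gb_pascal t m : gb t m.+1 = gb (t - 1) m.+1 + gb (t - 1) m.
Proof.
rewrite gbS gbSr.
have h2 : m.+1%:R != 0 :> F by rewrite pnatr_eq0.
rewrite -nat1r in h2 *.
field; by rewrite h2.
Qed.

Lemma gb_nat m r : gb m%:R r = ('C(m, r))%:R.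
Proof.
elim: m r => [|m IH] r.
  case: r => [|r]; first by rewrite gb0 bin0.
  by rewrite gbS mul0r mul0r bin0n.
case: r => [|r]; first by rewrite gb0 bin0.
by rewrite gb_pascal mulrSr addrK !IH binS natrD.
Qed.

Lemma gb_shift t r : gb (t + 1) r * (t + 1 - r%:R) = (t + 1) * gb t r.
Proof.
have := gbS (t + 1) r; rewrite gbSr addrK => E.
have h2 : r.+1%:R != 0 :> F by rewrite pnatr_eq0.
by apply: (mulIf (invr_neq0 h2)); rewrite E.
Qed.

Definition A (k n : nat) (x : F) : F :=
  if n is n'.+1 then x / n%:R * gb (x + (k * n)%:R - 1) n' else 1.

Lemma A_diff k m y : A k m.+1 y - A k m.+1 (y - 1) = A k m (y + k%:R - 1).
Proof.
case: m => [|m]; first by rewrite /A !gb0 !divr1 !mulr1 opprB addrC subrK.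
rewrite /A.
set t := y + (k * m.+2)%:R - 1 - 1.
have e1 : y + (k * m.+2)%:R - 1 = t + 1 by rewrite /t subrK.
have e2 : y - 1 + (k * m.+2)%:R - 1 = t by rewrite /t; ring.
have e3 : y + k%:R - 1 + (k * m.+1)%:R - 1 = t.
  by rewrite /t !natrM -!nat1r; ring.
rewrite e1 e2 e3 gbS addrK gbSr.
set g := gb t m.
have h1 : m.+1%:R != 0 :> F by rewrite pnatr_eq0.
have h2 : m.+2%:R != 0 :> F by rewrite pnatr_eq0.
rewrite /t !natrM -!nat1r in h1 h2 *.
field; by rewrite h1 h2.
Qed.

Lemma A0 k n : A k n.+1 0 = 0.
Proof. by rewrite /A mul0r mul0r. Qed.

Lemma A_zero k x : A k 0 x = 1.
Proof. by []. Qed.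

Lemma conv k (x : F) n (y : int) :
  \sum_(i < n.+1) A k i x * A k (n - i) y%:~R = A k n (x + y%:~R).
Proof.
elim: n y => [|n IH] y.
  by rewrite big_ord_recl big_ord0 /= addr0 mulr1.
pose D (y : int) := \sum_(i < n.+2) A k i x * A k (n.+1 - i) y%:~R - A k n.+1 (x + y%:~R).
suff: forall y, D y = 0 by move=> /(_ y) /eqP; rewrite subr_eq0 => /eqP.
have per : forall y, D y = D (y - 1).
  move=> z.
  have cz : (z - 1)%:~R = z%:~R - 1 :> F by rewrite intrB.
  have ck : (z + (k%:Z - 1))%:~R = z%:~R + k%:R - 1 :> F by rewrite intrD intrB addrA.
  have H1 : \sum_(i < n.+2) A k i x * A k (n.+1 - i) z%:~R
          - \sum_(i < n.+2) A k i x * A k (n.+1 - i) (z - 1)%:~R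
          = \sum_(i < n.+1) A k i x * A k (n - i) (z + (k%:Z - 1))%:~R.
    rewrite -sumrB big_ord_recr /= subnn subrr addr0.
    apply: eq_bigr => i _.
    rewrite -mulrBr; congr (_ * _).
    have -> : (n.+1 - i = (n - i).+1)%N by rewrite subSn // -ltnS.
    by rewrite cz A_diff ck.
  have H2 : A k n.+1 (x + z%:~R) - A k n.+1 (x + (z - 1)%:~R)
          = A k n (x + (z + (k%:Z - 1))%:~R).
    by rewrite cz addrA A_diff ck !addrA.
  apply/eqP; rewrite -subr_eq0 /D.
  have ee : forall a b c d : F, (a - b) - (c - d) = (a - c) - (b - d) by move=> *; ring.
  by rewrite ee H1 H2 IH subrr.
have D0 : D 0 = 0.
  rewrite /D big_ord_recr /= subnn /= addr0 big1 ?add0r ?mulr1 ?subrr //.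
  move=> i _; have -> : (n.+1 - i = (n - i).+1)%N by rewrite subSn // -ltnS.
  by rewrite A0 mulr0.
move=> [] m.
  elim: m => [|m IHm]; first exact: D0.
  by rewrite per -IHm; congr D; rewrite -addn1 PoszD addrK.
elim: m => [|m IHm].
  by rewrite -D0 [RHS]per.
rewrite -IHm [RHS]per; congr D.
by rewrite !NegzE -addn1 PoszD opprD.
Qed.

Definition fs (k n : nat) : F :=
  if n == 0%N then 0 else ((k.-1)%:R / (k * n).-1%:R) * ('C((k * n).-1, n.-1))%:R.

Lemma Am1 k m : (2 <= k)%N ->
  A k m.+1 (-1) = - (('C((k * m.+1 - 2)%N, m))%:R / m.+1%:R).
Proof.
move=> k2; rewrite /A.
have -> : -1 + (k * m.+1)%:R - 1 = (k * m.+1 - 2)%N%:R :> F.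
  rewrite natrB; last by rewrite (leq_trans k2) // leq_pmulr.
  ring.
by rewrite gb_nat; ring.
Qed.

Lemma fs_A k n : (2 <= k)%N -> fs k n = (n == 0%N)%:R - A k n (-1).
Proof.
move=> k2; case: n => [|m]; first by rewrite /fs /= subrr.
rewrite Am1 // /fs /= sub0r opprK.
set N := (k * m.+1)%N.
have hN : (2 <= N)%N by rewrite (leq_trans k2) // leq_pmulr.
have hb := mul_bin_down N.-1 m.
have e1 : (N.-1.-1 = N - 2)%N by rewrite -subn2; lia.
have e2 : (N.-1 - m = k.-1 * m.+1)%N by rewrite /N; case: k k2 {N hN hb e1} => // k _; rewrite mulSn; lia.
rewrite e1 e2 in hb.
have /(congr1 (fun x => x%:R : F)) := hb; rewrite !natrM => hb'.
have h1 : N.-1%:R != 0 :> F by rewrite pnatr_eq0; lia.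
have h2 : k.-1%:R != 0 :> F by rewrite pnatr_eq0; lia.
have h3 : m.+1%:R != 0 :> F by rewrite pnatr_eq0.
have hc : ('C(N.-1, m))%:R = N.-1%:R * ('C(N - 2, m))%:R / (k.-1%:R * m.+1%:R) :> F.
  rewrite hb'; field; by rewrite ?nat1r h2 h3.
rewrite hc; field; by rewrite ?nat1r h1 h2 h3.
Qed.

Lemma A_rel k n : (2 <= k)%N ->
  2 * ((k.-1)%:R * n%:R - 1) * A k n (-1) = (k%:R * n%:R - 2) * A k n (-2).
Proof.
move=> k2; case: n => [|m]; first by rewrite /= mulr0 mulr1; ring.
rewrite /A.
set t := -2 + (k * m.+1)%:R - 1.
have -> : -1 + (k * m.+1)%:R - 1 = t + 1 by rewrite /t; ring.
have hs := gb_shift (t) m.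
have e : t + 1 - m%:R = (k.-1)%:R * m.+1%:R - 1.
  rewrite /t natrM; case: k k2 {hs t} => // k _; rewrite -!nat1r; ring.
rewrite e in hs.
have h3 : m.+1%:R != 0 :> F by rewrite pnatr_eq0.
set X := (k.-1)%:R * m.+1%:R - 1.
have -> : 2 * X * (-1 / m.+1%:R * gb (t + 1) m) = -2 / m.+1%:R * (gb (t + 1) m * X) by ring.
rewrite hs.
have -> : k%:R * m.+1%:R - 2 = t + 1 by rewrite /t natrM; ring.
ring.
Qed.

End Comb.


Section Poly.
Variable F : numFieldType.
Variable k : nat.
Hypothesis k2 : (2 <= k)%N.

Definition Vp (N : nat) : {poly F} := \poly_(i < N.+1) A k i (-1).
Definition th (p : {poly F}) := 'X * p^`().

Lemma coef_th p i : (th p)`_i = p`_i *+ i.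
Proof. by rewrite /th coefXM coef_deriv; case: i => [|i] //=; rewrite mulr0n. Qed.

Lemma th_mul p q : th (p * q) = th p * q + p * th q.
Proof. by rewrite /th derivM mulrDr mulrA [p * ('X * _)]mulrCA mulrA. Qed.

Lemma th_exp p n : th (p ^+ n.+1) = (p ^+ n * th p) *+ n.+1.
Proof. by rewrite /th deriv_exp /= mulrnAr [p^`() * _]mulrC mulrCA. Qed.

Lemma th_sub1 p : th (1 - p) = - th p.
Proof. by rewrite /th derivB -polyC1 derivC sub0r mulrN. Qed.

Lemma coefV N i : (i <= N)%N -> (Vp N)`_i = A k i (-1).
Proof. by move=> hi; rewrite coef_poly ltnS hi. Qed.

Lemma coefV2 N n : (n <= N)%N -> (Vp N ^+ 2)`_n = A k n (-2).
Proof.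
move=> hn; rewrite expr2 coefM.
have := @conv F k (-1) n (-1).
rewrite (_ : -1 + -1 = -2 :> F); last by ring.
move=> <-; apply: eq_bigr => i _.
have hi : (i <= N)%N by rewrite (leq_trans _ hn) // -ltnS.
have hi' : (n - i <= N)%N by rewrite (leq_trans (leq_subr _ _)).
by rewrite !coefV.
Qed.

Definition trz N (p : {poly F}) := forall i, (i <= N)%N -> p`_i = 0.

Lemma trzM N p q : trz N p -> trz N (q * p).
Proof.
move=> hp i hi; rewrite coefM big1 // => j _.
by rewrite hp ?mulr0 // (leq_trans (leq_subr _ _)).
Qed.

Definition Ep N := (k.-1)%:R *: th (Vp N) - (k%:R / 2) *: th (Vp N ^+ 2) - (Vp N - Vp N ^+ 2).

Lemma trzE N : trz N (Ep N).
Proof.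
move=> n hn; rewrite /Ep !coefB !coefZ !coef_th coefV2 // coefV //.
have h := @A_rel F k n k2.
have two : (2 : F) != 0 by rewrite pnatr_eq0.
apply: (mulfI two); rewrite mulr0.
set a := A k n (-1) in h *; set b := A k n (-2) in h *.
rewrite -[a *+ n]mulr_natr -[b *+ n]mulr_natr.
have -> : 2 * (k.-1%:R * (a * n%:R) - k%:R / 2 * (b * n%:R) - (a - b))
        = 2 * (k.-1%:R * n%:R - 1) * a - (k%:R * n%:R - 2) * b by field.
by rewrite h subrr.
Qed.

Definition Up N := (1 - Vp N) * Vp N ^+ k.-1.

Lemma thU N : th (Up N) - Up N = Vp N ^+ (k.-2) * Ep N.
Proof.
rewrite /Up /Ep th_mul th_sub1.
case: k k2 => // [] // [] // k' _ /=.
rewrite th_exp expr2 th_mul.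
set V := Vp N; set T := th V.
rewrite -mulr_natl.
have two : (2 : F) != 0 by rewrite pnatr_eq0.
rewrite exprS.
set W := V ^+ k'.
have -> : (k'.+2%:R / 2 : F) *: (T * V + V * T) = k'.+2%:R *: (V * T).
  by rewrite [T * V]mulrC -mulr2n -scaler_nat scalerA divfK.
rewrite !scaler_nat; ring.
Qed.

Lemma coef0X (p : {poly F}) m : (p ^+ m)`_0 = p`_0 ^+ m.
Proof. by elim: m => [|m IH]; rewrite ?coef1 // !exprS coef0M IH. Qed.

Lemma A1m1 : A k 1 (-1) = -1 :> F.
Proof. by rewrite /A gb0 divr1 mulr1. Qed.


Lemma Up_coef N n : (1 <= N)%N -> (n <= N)%N -> (Up N)`_n = (n == 1%N)%:R :> F.
Proof.
move=> N1 hn.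
have ht : trz N (th (Up N) - Up N) by rewrite thU //; apply: trzM; apply: trzE.
have := ht n hn; rewrite coefB coef_th => h.
case: (eqVneq n 1%N) => [->|n1].
  rewrite /Up coefM big_ord_recr big_ord_recl big_ord0 /= addr0 subnn subn0.
  rewrite !coefB !coef1 /= coef0X !coefV // A1m1 /A subrr mul0r add0r sub0r opprK mul1r expr1n.
  by [].
change ((Up N)`_n = 0).
set u := (Up N)`_n in h *.
have : u * (n%:R - 1) = 0 by rewrite mulrBr mulr1 mulr_natr.
move/eqP; rewrite mulf_eq0 => /orP [/eqP //|]; rewrite subr_eq0.
by rewrite (_ : 1 = 1%:R :> F) // eqr_nat (negbTE n1).
Qed.

End Poly.

Section Bounds.
Variable F : numFieldType.

Lemma term_le_sum M (f : nat -> F) j : (j < M)%N -> (forall i, 0 <= f i) ->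
  f j <= \sum_(i < M) f i.
Proof.
move=> hj f0; rewrite (bigD1 (Ordinal hj)) //= lerDl.
by apply: sumr_ge0 => i _.
Qed.

Lemma lerXn_nn (x y : F) n : 0 <= x -> x <= y -> x ^+ n <= y ^+ n.
Proof.
move=> x0 xy; elim: n => [|n IH]; first by [].
rewrite !exprS; apply: ler_pM => //; exact: exprn_ge0.
Qed.

Lemma geom_le (t : F) M : 0 <= t -> t < 1 -> \sum_(i < M) t ^+ i <= (1 - t)^-1.
Proof.
move=> t0 t1.
have h : (1 - t) * \sum_(i < M) t ^+ i = 1 - t ^+ M.
  by apply: oppr_inj; rewrite -mulNr opprB -subrX1 opprB.
have pos : 0 < 1 - t by rewrite subr_gt0.
rewrite -(ler_pM2l pos) h mulfV ?gt_eqF // lerBlDr lerDl.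
exact: exprn_ge0.
Qed.

Lemma geom_tail (t : F) N M : 0 <= t -> t < 1 ->
  \sum_(i < M) (N < i)%N%:R * t ^+ i <= t ^+ N.+1 / (1 - t).
Proof.
move=> t0 t1.
have pos : 0 < 1 - t by rewrite subr_gt0.
suff inv : (1 - t) * \sum_(i < M) (N < i)%N%:R * t ^+ i
           + (if (N < M)%N then t ^+ M else t ^+ N.+1) = t ^+ N.+1.
  rewrite ler_pdivlMr // mulrC -[X in _ <= X]inv lerDl.
  by case: ifP => _; apply: exprn_ge0.
elim: M => [|M IH]; first by rewrite big_ord0 mulr0 add0r.
rewrite big_ord_recr /= mulrDr.
case: (ltnP N M) => hNM.
  rewrite hNM in IH; rewrite ltnW // mul1r.
  by rewrite -IH exprS; ring.
rewrite (_ : (N < M)%N = false) ?mul0r ?mulr0 ?addr0 in IH *; last by apply/negbTE; rewrite -leqNgt.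
case: ifP => h2 //.
have eNM : M = N by lia.
by subst M.
Qed.

End Bounds.

Section Bounds2.
Variable F : numFieldType.
Variable k : nat.
Hypothesis k2 : (2 <= k)%N.

Definition rho : F := (k.-1)%:R ^+ k.-1 / k%:R ^+ k.

Lemma k_neq0 : k%:R != 0 :> F.
Proof. by rewrite pnatr_eq0; lia. Qed.

Lemma rho_gt0 : 0 < rho.
Proof.
rewrite /rho divr_gt0 // exprn_gt0 // ltr0n; lia.
Qed.

Lemma binom_rho n : ('C(k * n, n))%:R * rho ^+ n <= 1 :> F.
Proof.
set x : F := (k.-1)%:R / k%:R; set y : F := k%:R^-1.
have hk := k_neq0.
have xy : x + y = 1.
  rewrite /x /y -[X in _ + X]mul1r -mulrDl natr1 prednK ?divff //; lia.
have hr : rho = x ^+ k.-1 * y.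
  rewrite /rho /x /y expr_div_n -mulrA -exprVn; congr (_ * _).
  rewrite -exprVn -exprSr prednK //; lia.
have E := exprDn x y (k * n); rewrite xy expr1n in E; rewrite [X in _ <= X]E.
have hn : (n < (k * n).+1)%N by rewrite ltnS leq_pmull //; lia.
apply: le_trans (term_le_sum (f := fun i => x ^+ (k * n - i) * y ^+ i *+ 'C(k * n, i)) hn _).
  rewrite /= hr exprMn -exprM.
  have -> : (k * n - n = k.-1 * n)%N by case: k k2 => // k' _; rewrite mulSn; lia.
  by rewrite mulr_natl.
move=> i; rewrite mulrn_wge0 // mulr_ge0 // exprn_ge0 //.
  by rewrite /x divr_ge0.
by rewrite /y invr_ge0.
Qed.

Lemma absA_bound i : `|A k i (-1)| * rho ^+ i <= 1 :> F.
Proof.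
case: i => [|m]; first by rewrite /= normr1 mul1r expr0.
rewrite Am1 // normrN ger0_norm ?divr_ge0 //.
apply: le_trans (binom_rho m.+1).
apply: ler_wpM2r; first by rewrite exprn_ge0 // ltW // rho_gt0.
rewrite ler_pdivrMr ?ltr0n //.
apply: le_trans (_ : ('C(k * m.+1, m.+1))%:R <= _).
  rewrite ler_nat.
  have h1 : ('C(k * m.+1 - 2, m) <= 'C((k * m.+1 - 2).+1, m.+1))%N by rewrite binS leq_addl.
  have h2 : ('C((k * m.+1 - 2).+1, m.+1) <= 'C((k * m.+1 - 2).+2, m.+1))%N.
    by rewrite [X in (_ <= X)%N]binS leq_addr.
  have e : ((k * m.+1 - 2).+2 = k * m.+1)%N.
    have : (2 <= k * m.+1)%N by rewrite (leq_trans k2) // leq_pmulr.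
    lia.
  by rewrite -[X in (_ <= 'C(X, _))%N]e (leq_trans h1 h2).
by rewrite ler_peMr // ler1n.
Qed.

End Bounds2.

Section Bounds3.
Variable F : numFieldType.
Variable k : nat.
Hypothesis k2 : (2 <= k)%N.

Definition dom (p q : {poly F}) := forall i, `|p`_i| <= q`_i.

Lemma dom_ge0 p q : dom p q -> forall i, 0 <= q`_i.
Proof. by move=> h i; apply: le_trans (h i). Qed.

Lemma domM p1 q1 p2 q2 : dom p1 q1 -> dom p2 q2 -> dom (p1 * p2) (q1 * q2).
Proof.
move=> h1 h2 i; rewrite !coefM; apply: le_trans (ler_norm_sum _ _ _) _.
apply: ler_sum => j _; rewrite normrM; apply: ler_pM => //.
Qed.

Lemma domX p q n : dom p q -> dom (p ^+ n) (q ^+ n).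
Proof.
move=> h; elim: n => [|n IH]; first by move=> i; rewrite !coef1 normr_nat.
by rewrite !exprS; apply: domM.
Qed.

Definition Wp N : {poly F} := \poly_(i < N.+1) `|A k i (-1)|.

Lemma domV N : dom (@Vp F k N) (Wp N).
Proof. by move=> i; rewrite !coef_poly; case: ifP => _; rewrite ?normr0 ?normr_id. Qed.

Lemma dom1V N : dom (1 - @Vp F k N) (Wp N).
Proof.
move=> i; rewrite coefB coef1 !coef_poly.
case: i => [|i] /=; first by rewrite subrr normr0 normr_ge0.
by rewrite sub0r normrN; case: ifP => _; rewrite ?normr0 ?normr_id.
Qed.

Lemma domU N : dom (@Up F k N) (Wp N ^+ k).
Proof.
have -> : Wp N ^+ k = Wp N * Wp N ^+ k.-1 by rewrite -exprS prednK // ltnW.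
rewrite /Up.
apply: domM; [exact: dom1V | apply: domX; exact: domV].
Qed.

Lemma coef_le_horner (q : {poly F}) x i : (forall j, 0 <= q`_j) -> 0 <= x ->
  q`_i * x ^+ i <= q.[x].
Proof.
move=> q0 x0.
rewrite (@horner_coef_wide _ (maxn (size q) i.+1)) ?leq_maxl //.
apply: (term_le_sum (f := fun j => q`_j * x ^+ j)); first by rewrite leq_max ltnSn orbT.
by move=> j; rewrite mulr_ge0 // exprn_ge0.
Qed.

Lemma W_horner N (r' : F) : 0 <= r' -> r' < @rho F k ->
  0 <= (Wp N).[r'] /\ (Wp N).[r'] <= (1 - r' / @rho F k)^-1.
Proof.
move=> r0 rlt.
have rp := rho_gt0 F k2.
rewrite (@horner_coef_wide _ N.+1); last by apply: size_poly.
split; first by apply: sumr_ge0 => i _; rewrite coef_poly ltn_ord mulr_ge0 // exprn_ge0.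
apply: le_trans (geom_le N.+1 _ _); last 2 first.
- by rewrite divr_ge0 // ltW.
- by rewrite ltr_pdivrMr // mul1r.
apply: ler_sum => i _; rewrite coef_poly ltn_ord.
have hb := @absA_bound F k k2 i.
have rn : (@rho F k) ^+ i != 0 by rewrite expf_neq0 // gt_eqF.
rewrite expr_div_n.
have -> : `|A k i (-1)| * r' ^+ i = (`|A k i (-1)| * (@rho F k) ^+ i) * (r' ^+ i / (@rho F k) ^+ i).
  by field.
rewrite -[X in _ <= X]mul1r; apply: ler_wpM2r => //.
by rewrite divr_ge0 // exprn_ge0 // ltW.
Qed.

Lemma tail_bound N (w r r' : F) : (1 <= N)%N -> `|w| <= r -> 0 <= r -> r < r' -> r' < @rho F k ->
  `|(@Up F k N - 'X).[w]| <= ((1 - r' / @rho F k)^-1) ^+ k * ((r / r') ^+ N.+1 / (1 - r / r')).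
Proof.
move=> N1 wr r0 rr' r'rho.
have r'0 : 0 < r' by apply: le_lt_trans rr'.
set P := @Up F k N - 'X; set G := (1 - r' / @rho F k)^-1; set t := r / r'.
have t0 : 0 <= t by rewrite divr_ge0 // ltW.
have t1 : t < 1 by rewrite ltr_pdivrMr // mul1r.
have PU : forall i, (N < i)%N -> P`_i = (@Up F k N)`_i.
  move=> i hi; rewrite coefB coefX.
  by rewrite (_ : (i == 1%N) = false) ?subr0 //; apply/negbTE; lia.
have [hW0 hW1] := W_horner N (ltW r'0) r'rho.
have KB : forall i, `|(@Up F k N)`_i| * r' ^+ i <= G ^+ k.
  move=> i; apply: le_trans (_ : (Wp N ^+ k)`_i * r' ^+ i <= _).
    by apply: ler_wpM2r; [rewrite exprn_ge0 // ltW | exact: domU].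
  apply: le_trans (coef_le_horner _ _ _) _.
  - exact: dom_ge0 (domU N).
  - exact: ltW.
  by rewrite horner_exp; apply: lerXn_nn.
rewrite horner_coef.
apply: le_trans (ler_norm_sum _ _ _) _.
apply: le_trans (_ : \sum_(i < size P) (N < i)%N%:R * (G ^+ k * t ^+ i) <= _).
  apply: ler_sum => i _; rewrite normrM normrX.
  case: (ltnP N i) => hi.
    rewrite mul1r PU //.
    apply: le_trans (_ : `|(@Up F k N)`_i| * r ^+ i <= _).
      by apply: ler_wpM2l => //; apply: lerXn_nn.
    have -> : `|(@Up F k N)`_i| * r ^+ i = (`|(@Up F k N)`_i| * r' ^+ i) * t ^+ i.
      by rewrite /t expr_div_n; field; rewrite expf_neq0 // gt_eqF.
    by apply: ler_wpM2r => //; rewrite exprn_ge0.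
  rewrite mul0r /P coefB Up_coef // coefX subrr normr0 mul0r //.
under eq_bigr do rewrite mulrCA.
rewrite -mulr_sumr; apply: ler_wpM2l; first by rewrite exprn_ge0 // /G invr_ge0 subr_ge0 ler_pdivrMr ?mul1r ?rho_gt0 // ltW.
exact: geom_tail.
Qed.

End Bounds3.

End Aux.
From mathcomp Require Import complex.
From mathcomp Require Import all_classical all_reals all_analysis.
Import Order.TTheory GRing.Theory Num.Theory numFieldTopology.Exports numFieldNormedType.Exports.
Import Aux.

Local Open Scope complex_scope.
Local Open Scope classical_set_scope.

Section T.
Variable R : realType.
Local Notation C := (Num.ClosedField.sort R[i]).
Local Notation ReC := (@complex.Re R).
Local Notation ImC := (@complex.Im R).

Lemma cvgXn_C (s : nat -> C) (L : C) m :
  s @ \oo --> L -> (fun n => s n ^+ m) @ \oo --> L ^+ m.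
Proof.
move=> h; elim: m => [|m IH].
  exact: cvg_cst.
have -> : (fun n => s n ^+ m.+1) = (fun n => s n * s n ^+ m) by apply/funext => n; rewrite exprS.
rewrite exprS.
exact: (cvgM h IH).
Qed.
Lemma f_cvg (s : nat -> C) (L : C) m :
  s @ \oo --> L -> (fun n => s n * (1 - s n) ^+ m) @ \oo --> L * (1 - L) ^+ m.
Proof.
move=> h.
have h1 : (fun n => 1 - s n) @ \oo --> (1 - L : C).
  exact: (cvgB (cvg_cst (1 : C)) h).
have h2 := @cvgXn_C _ _ m h1.
exact: (cvgM h h2).
Qed.
Lemma rc_rmorph (x y : R) : (x * y)%:C = x%:C * y%:C :> C.
Proof. by rewrite rmorphM. Qed.

Lemma normC_real (x : R) : `|x%:C| = `|x|%:C :> C.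
Proof. by rewrite normc_def /= expr0n addr0 sqrtr_sqr. Qed.

Lemma normC_is_real (x : C) : `|x| = (ReC `|x|)%:C.
Proof. by rewrite normc_def. Qed.

Lemma Re_le (x : C) : `|ReC x| <= ReC `|x|.
Proof. by rewrite -lecR -normC_is_real; apply: normc_ge_Re. Qed.

Lemma Im_le (x : C) : `|ImC x| <= ReC `|x|.
Proof.
have := Re_le (x * 'i%C); rewrite ReiNIm normrN normrM.
have -> : `|'i%C| = 1 :> C by rewrite normc_def /= expr0n add0r expr1n sqrtr1.
by rewrite mulr1.
Qed.

Lemma ReD (x y : C) : ReC (x + y) = ReC x + ReC y.
Proof. by case: x; case: y. Qed.
Lemma ImD (x y : C) : ImC (x + y) = ImC x + ImC y.
Proof. by case: x; case: y. Qed.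
Lemma ReB (x y : C) : ReC (x - y) = ReC x - ReC y.
Proof. by case: x; case: y. Qed.
Lemma ImB (x y : C) : ImC (x - y) = ImC x - ImC y.
Proof. by case: x; case: y. Qed.

Lemma Re_series (u : nat -> C) n : ReC (series u n) = series (fun i => ReC (u i)) n.
Proof.
elim: n => [|n IH]; first by rewrite !seriesEord /= !big_ord0.
by rewrite !seriesSr ReD IH.
Qed.
Lemma Im_series (u : nat -> C) n : ImC (series u n) = series (fun i => ImC (u i)) n.
Proof.
elim: n => [|n IH]; first by rewrite !seriesEord /= !big_ord0.
by rewrite !seriesSr ImD IH.
Qed.

Lemma real_series_cvg (v : nat -> R) (b : R) : 0 <= b -> b < 1 ->
  (forall i, `|v i| <= b ^+ i) -> cvgn (series v).
Proof.
move=> b0 b1 hv; apply: normed_cvg.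
apply: (@series_le_cvg R _ (geometric 1 b)).
- by move=> n; rewrite normr_ge0.
- by move=> n; rewrite /geometric /= mul1r exprn_ge0.
- by move=> n; rewrite /geometric /= mul1r.
apply: is_cvg_geometric_series; by rewrite ger0_norm.
Qed.


Lemma normi : `|'i%C| = 1 :> C.
Proof. by rewrite normc_def /= expr0n add0r expr1n sqrtr1. Qed.

Lemma norm_cplx (a b : R) : `|(a +i* b)%C : C| <= (`|a| + `|b|)%:C.
Proof.
have -> : (a +i* b)%C = a%:C + 'i%C * b%:C :> C.
  by apply/eqP; rewrite eq_complex /= !mul0r !mul1r !subr0 !addr0 !add0r !eqxx.
apply: le_trans (ler_normD _ _) _.
by rewrite normrM normi mul1r !normC_real rmorphD.
Qed.

Lemma cvg_C (u : nat -> C) (b : R) : 0 <= b -> b < 1 ->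
  (forall i, `|u i| <= (b ^+ i)%:C) -> exists L : C, series u @ \oo --> L.
Proof.
move=> b0 b1 hu.
have hb : forall i, ReC `|u i| <= b ^+ i.
  by move=> i; rewrite -lecR -normC_is_real.
have cr : cvgn (series (fun i => ReC (u i))).
  exact: (real_series_cvg _ _ b0 b1 (fun i => le_trans (Re_le _) (hb i))).
have ci : cvgn (series (fun i => ImC (u i))).
  exact: (real_series_cvg _ _ b0 b1 (fun i => le_trans (Im_le _) (hb i))).
set Lr := limn _ in cr; set Li := limn _ in ci.
exists (Lr +i* Li)%C.
apply/cvgrPdist_lt => eps eps0.
move: (eps0); rewrite ltcE => /andP[/eqP Ie Re0].
have epsE : eps = (ReC eps)%:C by case: eps Ie {eps0 Re0} => ea eb /= ->.
have e2 : 0 < ReC eps / 2 by rewrite divr_gt0.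
near=> n.
have h1 : `|Lr - series (fun i => ReC (u i)) n| < ReC eps / 2.
  by near: n; apply: cvgr_dist_lt.
have h2 : `|Li - series (fun i => ImC (u i)) n| < ReC eps / 2.
  by near: n; apply: cvgr_dist_lt.
have -> : (Lr +i* Li)%C - series u n
   = ((Lr - series (fun i => ReC (u i)) n) +i* (Li - series (fun i => ImC (u i)) n))%C.
  apply/eqP; rewrite eq_complex /= -Re_series -Im_series.
  by case: (series u n) => sa sb /=; rewrite !eqxx.
apply: le_lt_trans (norm_cplx _ _) _.
by rewrite epsE ltcR (splitr (ReC eps)) ltrD.
Unshelve. all: by end_near.
Qed.

End T.

Section Main.
Variable R : realType.
Local Notation C := (Num.ClosedField.sort R[i]).
Local Notation CF := (R[i] : numFieldType).
Local Notation ReC := (@complex.Re R).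

Lemma series_horner k (w : C) N : (2 <= k)%N ->
  series (fun i => (fuss_s R k i * w ^+ i : C)) N.+1 = (1 - @Vp CF k N).[w].
Proof.
move=> k2.
rewrite seriesEord /= (@horner_coef_wide _ N.+1).
  apply: eq_bigr => i _; congr (_ * _).
  rewrite coefB coef1 coef_poly ltn_ord.
  by transitivity (@fs CF k i); [by [] | exact: fs_A].
apply: leq_trans (size_add _ _) _; rewrite size_opp geq_max size_poly1 //.
exact: size_poly.
Qed.

Lemma Up_horner k (w : C) N : (2 <= k)%N ->
  (@Up CF k N).[w] = (1 - @Vp CF k N).[w] * (1 - (1 - @Vp CF k N).[w]) ^+ k.-1.
Proof.
move=> k2; rewrite /Up hornerM horner_exp; congr (_ * _ ^+ _).
by rewrite hornerD hornerN hornerC opprD opprK addNKr.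
Qed.

Lemma rhoE k : @rho CF k = ((k.-1)%:R ^+ k.-1 / k%:R ^+ k : R)%:C.
Proof. by rewrite /rho rmorphM rmorphXn fmorphV rmorphXn !rmorph_nat. Qed.

Lemma fs_bound k i (w : C) : (2 <= k)%N ->
  `|fuss_s R k i * w ^+ i| <= (`|w| / @rho CF k) ^+ i.
Proof.
move=> k2.
have -> : fuss_s R k i = (i == 0%N)%:R - A k i (-1) :> CF.
  by transitivity (@fs CF k i); [by [] | exact: fs_A].
have hb := @absA_bound CF k k2 i.
have rp := @rho_gt0 CF k k2.
have rn : (@rho CF k) ^+ i != 0 by rewrite expf_neq0 // gt_eqF.
have ha : `|(i == 0%N)%:R - A k i (-1) : CF| <= `|A k i (-1)|.
  case: i {hb rn} => [|i] /=; first by rewrite subrr normr0 normr_ge0.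
  by rewrite sub0r normrN.
rewrite normrM normrX expr_div_n.
apply: le_trans (_ : `|A k i (-1) : CF| * `|w| ^+ i <= _).
  by apply: ler_wpM2r => //; rewrite exprn_ge0.
have -> : `|A k i (-1) : CF| * `|w| ^+ i = (`|A k i (-1)| * (@rho CF k) ^+ i) * (`|w| ^+ i / (@rho CF k) ^+ i).
  by field.
rewrite -[X in _ <= X]mul1r; apply: ler_wpM2r => //.
by rewrite divr_ge0 // exprn_ge0 // ltW.
Qed.

End Main.

Theorem lemma4p3 (R : realType) (k : nat) (p : R) (z : R[i]) :
  (2 <= k)%N -> 0 < p < 1 ->
  `|z| < (Rstar k p)%:C ->
  ((1 - p)%:C)^-1 * fussS k ((p ^+ k.-1 * (1 - p))%:C * z) = 1 ->
  z = 1.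
Proof.
move=> k2 /andP[p0 p1] hz H.
pose CF := (R[i] : numFieldType).
set q := 1 - p; set c := p ^+ k.-1 * q.
have q0 : 0 < q by rewrite subr_gt0.
have c0 : 0 < c by rewrite mulr_gt0 // exprn_gt0.
set w := c%:C * z.
set rhoR : R := (k.-1)%:R ^+ k.-1 / k%:R ^+ k.
have rE : @rho CF k = rhoR%:C := rhoE R k.
have rhoR0 : 0 < rhoR by rewrite -ltcR -rE; exact: rho_gt0.
set rR := complex.Re `|w|.
have wE : `|w| = rR%:C := @normC_is_real R w.
have rR0 : 0 <= rR by rewrite -ler0c -wE.
have rRlt : rR < rhoR.
  rewrite -ltcR -wE /w normrM (@normC_real R) (gtr0_norm c0).
  have -> : rhoR%:C = c%:C * (Rstar k p)%:C :> R[i].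
    rewrite -rmorphM; congr (_%:C).
    have cn : c != 0 by rewrite gt_eqF.
    rewrite /Rstar -/q -/c /rhoR; field.
    by rewrite cn expf_neq0 // pnatr_eq0; lia.
  by rewrite ltr_pM2l // ltcR.
set r'R := (rR + rhoR) / 2.
have r'1 : rR < r'R by rewrite /r'R; lra.
have r'2 : r'R < rhoR by rewrite /r'R; lra.
set bR := rR / rhoR.
have bR0 : 0 <= bR by rewrite divr_ge0 // ltW.
have bR1 : bR < 1 by rewrite ltr_pdivrMr // mul1r.
set u := fun i => (fuss_s R k i * w ^+ i : Num.ClosedField.sort R[i]).
have hu : forall i, `|u i| <= (bR ^+ i)%:C.
  move=> i; apply: le_trans (@fs_bound R k i w k2) _.
  have hb : (bR ^+ i)%:C = (rR%:C / rhoR%:C) ^+ i :> R[i] by rewrite rmorphXn fmorph_div.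
  by rewrite hb wE rE.
have [L hL] := @cvg_C R u bR bR0 bR1 hu.
have SL : fussS k w = L by rewrite /fussS; exact: (cvg_lim _ hL).
have fL : L * (1 - L) ^+ k.-1 = w.
  apply/eqP; rewrite -subr_eq0; apply/eqP.
  set D := L * (1 - L) ^+ k.-1 - w.
  case: (eqVneq D 0) => // hD; exfalso.
  have d0 : 0 < `|D| by rewrite normr_gt0.
  set dR := complex.Re `|D|.
  have dE : `|D| = dR%:C := @normC_is_real R D.
  have dR0 : 0 < dR by move: d0; rewrite dE ltcE /= => /andP[_].
  set thR := rR / r'R.
  have r'0 : 0 < r'R by apply: le_lt_trans r'1.
  have th0 : 0 <= thR by rewrite divr_ge0 // ltW.
  have th1 : thR < 1 by rewrite ltr_pdivrMr // mul1r.
  set GR := (1 - r'R / rhoR)^-1.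
  have GR0 : 0 < GR by rewrite invr_gt0 subr_gt0 ltr_pdivrMr // mul1r.
  set delta := dR / 2 * (1 - thR) / GR ^+ k.
  have delta0 : 0 < delta by rewrite divr_gt0 ?exprn_gt0 // mulr_gt0 ?divr_gt0 // subr_gt0.
  have hf := @f_cvg R (series u) L k.-1 hL.
  have hth : (fun n => thR ^+ n) @ \oo --> 0.
    by apply: cvg_expr; rewrite ger0_norm.
  have hpos : 0 < `|D| / 2 by rewrite divr_gt0.
  near \oo => n.
  have n2 : (2 <= n)%N by near: n; exact: nbhs_infty_ge.
  have h1 : `|L * (1 - L) ^+ k.-1 - series u n * (1 - series u n) ^+ k.-1| < `|D| / 2.
    near: n; exact: (cvgr_dist_lt _ _ hf _ hpos).
  have h2 : `|thR ^+ n| < delta.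
    near: n; exact: (cvgr0_norm_lt _ hth _ delta0).
  set N := n.-1.
  have nE : n = N.+1 by rewrite /N prednK //; apply: leq_trans n2.
  have N1 : (1 <= N)%N by rewrite /N -ltnS -nE.
  have hs := @series_horner R k w N k2.
  have hU := @Up_horner R k w N k2.
  have wle : `|w| <= rR%:C by rewrite wE.
  have rR0' : 0 <= rR%:C :> CF by rewrite ler0c.
  have r'1' : rR%:C < r'R%:C :> CF by rewrite ltcR.
  have r'2' : r'R%:C < @rho CF k by rewrite rE ltcR.
  have tb := @tail_bound CF k k2 N w rR%:C r'R%:C N1 wle rR0' r'1' r'2'.
  have bE : ((1 - r'R%:C / @rho CF k)^-1) ^+ k * ((rR%:C / r'R%:C) ^+ N.+1 / (1 - rR%:C / r'R%:C))
      = (GR ^+ k * (thR ^+ n / (1 - thR)))%:C.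
    rewrite rE /GR /thR nE.
    by rewrite !(rmorphM, rmorphXn, fmorphV, rmorphB, rmorph1).
  rewrite bE in tb.
  have bl : GR ^+ k * (thR ^+ n / (1 - thR)) < dR / 2.
    move: h2; rewrite ger0_norm ?exprn_ge0 // /delta ltr_pdivlMr ?exprn_gt0 // => h2.
    rewrite mulrA ltr_pdivrMr ?subr_gt0 // mulrC.
    exact: h2.
  have sfw : series u n * (1 - series u n) ^+ k.-1 - w = (@Up CF k N - 'X).[w].
    by rewrite hornerD hornerN hornerX hU -hs nE.
  set X1 := L * (1 - L) ^+ k.-1 - series u n * (1 - series u n) ^+ k.-1 in h1 *.
  set X2 := series u n * (1 - series u n) ^+ k.-1 - w in sfw *.
  have hD2 : `|D| <= `|X1| + `|X2|.
    have -> : D = X1 + X2 by rewrite /D /X1 /X2; ring.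
    exact: ler_normD.
  have h3 : `|X2| < `|D| / 2.
    rewrite sfw.
    have -> : `|D| / 2 = (dR / 2)%:C :> R[i] by rewrite dE fmorph_div rmorph_nat.
    apply: (le_lt_trans tb).
    by rewrite ltcR.
  have : `|D| < `|D| / 2 + `|D| / 2 := le_lt_trans hD2 (ltrD h1 h3).
  by rewrite -splitr ltxx.
  Unshelve. all: try by end_near.
rewrite SL in H.
have qn : q%:C != 0 :> R[i] by rewrite eq_complex /= eqxx andbT gt_eqF.
have Lq : L = q%:C.
  by apply: (mulfI (invr_neq0 qn)); rewrite H mulVf.
rewrite Lq in fL.
have e1 : 1 - q%:C = p%:C :> R[i].
  by apply/eqP; rewrite eq_complex /=; apply/andP; split; apply/eqP; rewrite /q; ring.
rewrite e1 in fL.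
have cn : c%:C != 0 :> R[i] by rewrite eq_complex /= eqxx andbT gt_eqF.
apply: (mulfI cn); rewrite mulr1 -/w -fL /c rmorphM rmorphXn mulrC.
by [].
Qed.
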